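(* Let $f:E_A^{\mathbb N}\to\mathbb R$ be summable, strongly regular and Hölder-type with $P(f)=0$. There is a constant $K_1>0$, depending only on $h$, such that for every $n\ge1$, every $\omega\in E_A^n$ and every $\rho\in E_A^{\mathbb N}$ with $\omega\rho$ admissible, $$(1-K_1e^{-n\alpha})h(\omega\rho)m([\omega])\le\mu([\omega])\le(1+K_1e^{-n\alpha})h(\omega\rho)m([\omega]).$$
   Context: $E$ countable, $A:E\times E\to\{0,1\}$, $E_A^{\mathbb N}$ admissible one-sided sequences, $E_A^n$ admissible words of length $n$; the subshift is finitely irreducible. $S_nf=\sum_{j<n}f\circ\sigma^j$, $[\omega]$ cylinders, $|\rho\wedge\rho'|$ common-prefix length. Fix $\alpha>0$; Hölder-type: $V_\alpha(f)=\sup_{n\ge1}\sup\{|f(\rho)-f(\rho')|e^{\alpha(n-1)}:|\rho\wedge\rho'|\ge n\}<\infty$. Summable: $\sum_e\exp(\sup_{[e]}f)<\infty$. $P(g)=\lim_n\frac1n\log\sum_{\omega\in E_A^n}\exp(\sup_{[\omega]}S_ng)$; strongly regular: $P(xf)=0$ for some $x>0$ and $0<P(xf)<\infty$ for some $x>0$. $\mathcal L_1g(\rho)=\sum_{e:A_{e\rho_1}=1}e^{f(e\rho)}g(e\rho)$; $m$ the Borel probability with $\mathcal L_1^*m=m$; $h$ the positive Hölder continuous function with $\mathcal L_1h=h$, $\int h\,dm=1$; $\mu$ the measure $\mu(B)=\int_Bh\,dm$. *)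

(* Defs.v *)
From HB Require Import structures.
From mathcomp Require Import all_boot all_order all_algebra.
From mathcomp Require Import all_classical all_reals all_analysis.
Set Implicit Arguments. Unset Strict Implicit. Unset Printing Implicit Defensive.
Import Order.TTheory GRing.Theory Num.Theory.
Local Open Scope classical_set_scope.
Local Open Scope ring_scope.

Section Symbolic.
Variables (E : countType) (A : rel E).

Record EAN := MkEAN { seq_of :> nat -> E ;
                      adm_of : forall i, A (seq_of i) (seq_of i.+1) }.

HB.instance Definition _ := gen_eqMixin EAN.
HB.instance Definition _ := gen_choiceMixin EAN.

(* E_A^N with a distinguished point (only used to get a pointed type,
   as required by MathComp-Analysis for measurable spaces) *)
Definition EANp (r0 : EAN) : Type := EAN.
HB.instance Definition _ (r0 : EAN) := Choice.on (EANp r0).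
HB.instance Definition _ (r0 : EAN) := isPointed.Build (EANp r0) r0.

Definition shiftEAN (r : EAN) : EAN :=
  @MkEAN (fun i => r i.+1) (fun i => adm_of r i.+1).

(* concatenation e rho, when A_{e rho_1} = 1 (otherwise junk value rho) *)
Definition consE (e : E) (r : EAN) : EAN :=
  match A e (r 0%N) as b return A e (r 0%N) = b -> EAN with
  | true => fun H =>
      @MkEAN (fun i => if i is k.+1 then r k else e)
        (fun i => match i as i0 return
                    A (if i0 is k.+1 then r k else e)
                      (if i0.+1 is k.+1 then r k else e) with
                  | 0%N => H
                  | k.+1 => adm_of r k
                  end)
  | false => fun _ => r
  end erefl.

Definition words (n : nat) : set (seq E) :=
  [set w | size w = n /\ sorted A w].

Definition pref (r : EAN) (n : nat) : seq E := mkseq r n.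

Definition cyl (w : seq E) : set EAN := [set r | pref r (size w) = w].

Definition cylinders (r0 : EAN) : set (set (EANp r0)) := range cyl.

Definition finitely_irreducible : Prop :=
  exists L : seq (seq E), forall a b : E,
    exists2 l, l \in L & sorted A (a :: l ++ [:: b]).

Variable R : realType.

Definition Sn (g : EAN -> R) (n : nat) (r : EAN) : R :=
  \sum_(j < n) g (iter j shiftEAN r).

Definition supcyl (g : EAN -> R) (w : seq E) : R := sup [set g r | r in cyl w].

(* V_alpha(g) < oo ; |rho /\ rho'| >= n  <->  same first n letters *)
Definition holder_type (alpha : R) (g : EAN -> R) : Prop :=
  exists C : R, forall (n : nat) (r r' : EAN), (0 < n)%N ->
    pref r n = pref r' n ->
    `|g r - g r'| * expR (alpha * (n - 1)%:R) <= C.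

Definition pot_summable (g : EAN -> R) : Prop :=
  (\esum_(e in [set: E]) (expR (supcyl g [:: e]))%:E < +oo)%E.

Definition partition_fun (g : EAN -> R) (n : nat) : \bar R :=
  \esum_(w in words n) (expR (supcyl (Sn g n) w))%:E.

Definition pressure_seq (g : EAN -> R) (n : nat) : \bar R :=
  match partition_fun g n with
  | r%:E => (ln r / n%:R)%:E
  | +oo%E => +oo%E
  | -oo%E => -oo%E
  end.

Definition top_pressure (g : EAN -> R) : \bar R := limn (pressure_seq g).

Definition strongly_regular (g : EAN -> R) : Prop :=
  (exists x : R, 0 < x /\ top_pressure (fun r => (x * g r)%R) = 0%E) /\
  (exists x : R, 0 < x /\ (0 < top_pressure (fun r => (x * g r)%R) < +oo)%E).

Definition L1 (f : EAN -> R) (g : EAN -> \bar R) (r : EAN) : \bar R :=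
  \esum_(e in [set e | A e (r 0%N)]) ((expR (f (consE e r)))%:E * g (consE e r))%E.

End Symbolic.

(* E_A^N with its Borel sigma-algebra (generated by the cylinders) *)
Notation EANm E A r0 := (g_sigma_algebraType (@cylinders E A r0)).

(* Main.v *)
Require Import Defs.
From HB Require Import structures.
From mathcomp Require Import all_boot all_order all_algebra.
From mathcomp Require Import all_classical all_reals all_analysis.
From mathcomp Require Import lra ring.
Import Order.TTheory GRing.Theory Num.Theory.
Local Open Scope classical_set_scope.
Local Open Scope ring_scope.

Set Implicit Arguments. Unset Strict Implicit.

Section Comb.
Variables (E : countType) (A : rel E).

Lemma consE_val e (r : EAN A) : A e (r 0%N) ->
  forall i, consE e r i = if i is k.+1 then r k else e.
Proof.
move=> H i; rewrite /consE.
generalize (@erefl bool (A e (r 0%N))).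
case: {2 3}(A e (r 0%N)) => // E1.
by rewrite H in E1.
Qed.

Fixpoint catE (u : seq E) (r : EAN A) : EAN A :=
  if u is e :: u' then consE e (catE u' r) else r.

Lemma catE_head u (r : EAN A) : sorted A (u ++ [:: r 0%N]) ->
  catE u r 0%N = head (r 0%N) u /\ forall i, (i < size u)%N -> catE u r i = nth (r 0%N) u i.
Proof.
elim: u => [|e u IH] /= Hs; first by split.
have Hs' : sorted A (u ++ [:: r 0%N]) by exact: path_sorted Hs.
have [H0 Hn] := IH Hs'.
have Ae : A e (catE u r 0%N).
  by rewrite H0; move: Hs; case: u {IH Hs' H0 Hn} => [|x u] /= /andP[].
split; first by rewrite consE_val.
by case=> [|k] Hk; rewrite consE_val //= Hn.
Qed.

Lemma pref_catE u (r : EAN A) : sorted A (u ++ [:: r 0%N]) -> pref (catE u r) (size u) = u.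
Proof.
move=> /catE_head [_ Hn]; apply: (@eq_from_nth _ (r 0%N)); first by rewrite size_mkseq.
by move=> i; rewrite size_mkseq => Hi; rewrite nth_mkseq // Hn.
Qed.

Lemma sorted_pref (r : EAN A) N s : sorted A (r N :: s) -> sorted A (pref r N ++ r N :: s).
Proof.
elim: N s => [|N IH] s Hs; first by [].
rewrite /pref mkseqS cat_rcons; apply: IH => /=.
by rewrite adm_of.
Qed.

End Comb.

Section Anal.
Variables (E : countType) (A : rel E) (R : realType).

Lemma hstep (f h : EAN A -> R)
  (Lh : forall r, L1 f (fun t => (h t)%:E) r = (h r)%:E)
  (hpos : forall r, 0 < h r) e (r : EAN A) :
  A e (r 0%N) -> expR (f (consE e r)) * h (consE e r) <= h r.
Proof.
move=> Ae; rewrite -lee_fin -Lh /L1 EFinM.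
apply: esum_ge; exists [set e].
  by split; [exact: finite_set1 | move=> y ->].
rewrite fsbig_set1 //.
Qed.

Lemma hchain (f h : EAN A -> R)
  (Lh : forall r, L1 f (fun t => (h t)%:E) r = (h r)%:E)
  (hpos : forall r, 0 < h r) (lb : E -> R)
  (lbpos : forall e, 0 < lb e) (lbf : forall r : EAN A, lb (r 0%N) <= expR (f r)) :
  forall u (r : EAN A), sorted A (u ++ [:: r 0%N]) ->
  (\prod_(e <- u) lb e) * h (catE u r) <= h r.
Proof.
elim=> [|e u IH] r Hs; first by rewrite big_nil mul1r.
have Hs' : sorted A (u ++ [:: r 0%N]) by exact: path_sorted Hs.
have [H0 _] := catE_head Hs'.
have Ae : A e (catE u r 0%N).
  by rewrite H0; move: Hs; case: u {IH Hs' H0} => [|x u] /= /andP[].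
rewrite big_cons /=.
have P0 : 0 <= \prod_(j <- u) lb j by apply: prodr_ge0 => i _; exact/ltW.
apply: le_trans (IH r Hs').
rewrite [lb e * _]mulrC -mulrA ler_wpM2l //.
apply: le_trans (hstep Lh hpos Ae).
apply: ler_wpM2r; first exact/ltW.
have := lbf (consE e (catE u r)); by rewrite consE_val.
Qed.

Lemma holder_bound alpha (g : EAN A -> R) : holder_type alpha g ->
  exists C, 0 <= C /\ forall n (r r' : EAN A), (0 < n)%N -> pref r n = pref r' n ->
    `|g r - g r'| * expR (alpha * (n - 1)%:R) <= C.
Proof.
move=> [C HC]; exists (Num.max C 0); split; first by rewrite le_max lexx orbT.
by move=> n r r' n0 e; rewrite le_max HC.
Qed.

End Anal.

Section Anal2.
Variables (E : countType) (A : rel E) (R : realType).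

Lemma exists_lb alpha (f : EAN A -> R) : holder_type alpha f ->
  exists lb : E -> R, (forall e, 0 < lb e) /\ forall r : EAN A, lb (r 0%N) <= expR (f r).
Proof.
move=> /holder_bound [C [C0 HC]].
exists (fun e => match pselect (exists r : EAN A, r 0%N = e) with
  left P => expR (f (proj1_sig (cid P)) - C) | right _ => 1 end).
split => [e|r]; first by case: pselect => [P|nP]; [exact: expR_gt0 | exact: ltr01].
case: pselect => [P|nP]; last by exfalso; apply: nP; exists r.
have Hx := proj2_sig (cid P); move: Hx; set x := proj1_sig (cid P) => Hx.
rewrite ler_expR.
have := HC 1%N x r isT.
rewrite subnn mulr0 expR0 mulr1.
have -> : pref x 1 = pref r 1 by rewrite /pref /mkseq /= Hx.
move=> /(_ erefl); rewrite ler_norml => /andP[_ H]; lra.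
Qed.

Lemma h_inf alpha (f h : EAN A -> R) : 0 < alpha -> finitely_irreducible A ->
  holder_type alpha f -> holder_type alpha h ->
  (forall r, L1 f (fun t => (h t)%:E) r = (h r)%:E) ->
  (forall r, 0 < h r) -> forall r0 : EAN A,
  exists d, 0 < d /\ forall r, d <= h r.
Proof.
move=> a0 [L HL] Hf Hh Lh hpos r0.
have [lb [lbpos lbf]] := exists_lb Hf.
have [Ch [Ch0 HCh]] := holder_bound Hh.
set c := h r0; have c0 : 0 < c := hpos r0.
set N := (Num.trunc (2 * Ch / (c * alpha))).+1.
have Hk : forall x, pref x N.+1 = pref r0 N.+1 -> c / 2 <= h x.
  move=> x Hx; rewrite leNgt; apply/negP => hlt.
  have := HCh N.+1 x r0 isT Hx; rewrite subn1 /=.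
  have E1 := expR_ge1Dx (alpha * N%:R).
  have E2 : 2 * Ch / (c * alpha) < N%:R := truncnS_gt _.
  have ca0 : 0 < c * alpha by exact: mulr_gt0.
  have E3 : 2 * Ch < c * alpha * N%:R.
    by rewrite [c * alpha * _]mulrC -ltr_pdivrMr.
  have D : c / 2 < `|h x - h r0|.
    rewrite distrC; apply: lt_le_trans (ler_norm _).
rewrite -/c; lra.
  have Ep : 0 < expR (alpha * N%:R) := expR_gt0 _.
  set d := `|h x - h r0| in D *; set e := expR (alpha * N%:R) in E1 Ep *.
  have P1 : 0 <= (d - c / 2) * e by apply: mulr_ge0; lra.
  have P2 : 0 <= c * (e - (1 + alpha * N%:R)) by apply: mulr_ge0; lra.
  move=> H; nra.
pose q l := \prod_(e <- pref r0 N.+1 ++ l) lb e.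
have qpos l : 0 < q l by apply: prodr_gt0 => i _.
exists (c / 2 * \prod_(l <- L) Num.min (q l) 1); split.
  apply: mulr_gt0; first lra.
  by apply: prodr_gt0 => i _; rewrite lt_min qpos ltr01.
move=> r.
have [l lL Hl] := HL (r0 N) (r 0%N).
set u := pref r0 N.+1 ++ l.
have Hs : sorted A (u ++ [:: r 0%N]).
  rewrite /u -catA /pref mkseqS cat_rcons.
by have := sorted_pref Hl.
have Hx : pref (catE u r) N.+1 = pref r0 N.+1.
  have Hsz : (N.+1 <= size u)%N by rewrite /u size_cat size_mkseq leq_addr.
  apply: (@eq_from_nth _ (r 0%N)); rewrite !size_mkseq // => i Hi.
  rewrite !nth_mkseq // (catE_head Hs).2; last exact: leq_trans Hi Hsz.
  by rewrite /u nth_cat size_mkseq Hi nth_mkseq.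
have H1 := hchain Lh hpos lbpos lbf Hs.
have H2 := Hk _ Hx.
have Hq : \prod_(l <- L) Num.min (q l) 1 <= q l.
  rewrite (big_rem l lL) /=.
  have Pr : 0 <= \prod_(y <- rem l L) Num.min (q y) 1 <= 1.
    apply/andP; split; first by apply: prodr_ge0 => i _; rewrite le_min (ltW (qpos i)) ler01.
    by apply: prodr_ile1 => i _; rewrite le_min (ltW (qpos i)) ler01 ge_min lexx orbT.
  apply: le_trans (_ : Num.min (q l) 1 <= _); last by rewrite ge_min lexx.
  have M0 : 0 <= Num.min (q l) 1 by rewrite le_min (ltW (qpos l)) ler01.
  by rewrite -[X in _ <= X]mulr1 ler_wpM2l //; case/andP: Pr.
apply: le_trans H1.
have qu : 0 < \prod_(e <- u) lb e by apply: prodr_gt0.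
rewrite mulrC; apply: ler_pM => //; last lra.
by apply: prodr_ge0 => i _; rewrite le_min (ltW (qpos i)) ler01.
Qed.

End Anal2.

Lemma le_int_nonmeas d (T : measurableType d) (R : realType)
  (mu : {measure set T -> \bar R}) (D : set T) (f1 f2 : T -> \bar R) :
  (forall x, D x -> 0 <= f1 x)%E -> (forall x, D x -> f1 x <= f2 x)%E ->
  (\int[mu]_(x in D) f1 x <= \int[mu]_(x in D) f2 x)%E.
Proof.
move=> f10 f12.
have f20 : forall x, D x -> (0 <= f2 x)%E by move=> x Dx; exact: le_trans (f10 x Dx) (f12 x Dx).
rewrite !ge0_integralE //; apply: ereal_sup_le => _ [g Hg <-]; exists g => //= x.
apply: le_trans (Hg x) _; rewrite /patch; case: ifP => // /set_mem Dx; exact: f12.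
Qed.
Unset Implicit Arguments. Set Strict Implicit.
Theorem mainTheorem14 (R : realType) (E : countType) (A : rel E)
  (alpha : R) (r0 : EAN A)
  (f : EAN A -> R) (m : probability (EANm E A r0) R) (h : EAN A -> R) :
  0 < alpha ->
  finitely_irreducible A ->
  pot_summable f -> strongly_regular f -> holder_type alpha f ->
  top_pressure f = 0%E ->
  (* m : Borel probability with L_1^* m = m *)
  (forall B : set (EANm E A r0), measurable B ->
     (\int[m]_x L1 f (fun t => (\1_B t)%:E) x = m B)%E) ->
  (* h : positive Hölder continuous, L_1 h = h, int h dm = 1 *)
  (forall r, 0 < h r) -> holder_type alpha h ->
  (forall r, L1 f (fun t => (h t)%:E) r = (h r)%:E) ->
  (\int[m]_x (h x)%:E = 1)%E ->
  exists K1 : R, 0 < K1 /\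
    forall (n : nat) (w : seq E), (0 < n)%N -> words A n w ->
    forall t : EAN A, cyl w t ->
      (((1 - K1 * expR (- (n%:R * alpha))) * h t)%:E * m (cyl w)
         <= \int[m]_(x in cyl w) (h x)%:E)%E /\
      (\int[m]_(x in cyl w) (h x)%:E
         <= ((1 + K1 * expR (- (n%:R * alpha))) * h t)%:E * m (cyl w))%E.
Proof.
move=> a0 FI _ _ Hf _ _ hpos Hh Lh _.
have [dl [dl0 Hdl]] := h_inf a0 FI Hf Hh Lh hpos r0.
have [Ch [Ch0 HCh]] := holder_bound Hh.
exists ((Ch + 1) * expR alpha / dl); split.
  by apply: divr_gt0 => //; apply: mulr_gt0; [lra | exact: expR_gt0].
move=> n w n0 [Hsz _] t Ht.
set K1 := (Ch + 1) * expR alpha / dl.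
set e := expR (- (n%:R * alpha)).
have e0 : 0 < e by exact: expR_gt0.
have key : forall x, cyl w x -> `|h x - h t| <= K1 * e * h t.
  move=> x Hx.
  have := HCh n x t n0; rewrite -Hsz Hx Ht => /(_ erefl).
  have Hone : expR (alpha * (size w - 1)%:R) * (expR alpha * e) = 1.
    rewrite /e -!expRD natrB ?Hsz // -[RHS]expR0; congr expR; ring.
  move=> H.
  have H1 : `|h x - h t| <= Ch * (expR alpha * e).
    rewrite -[X in X <= _]mulr1 -Hone (mulrA `|h x - h t|); apply: ler_wpM2r => //.
    by apply: mulr_ge0; [exact: ltW (expR_gt0 _) | exact: ltW].
  apply: le_trans H1 _.
  have ht : dl <= h t := Hdl t.
  have Ea : 0 < expR alpha * e by apply: mulr_gt0 => //; exact: expR_gt0.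
  have -> : K1 * e * h t = (Ch + 1) * (expR alpha * e) * (h t / dl) by rewrite /K1; ring.
  have q1 : 1 <= h t / dl by rewrite ler_pdivlMr // mul1r.
  set X := expR alpha * e in Ea *; set Y := h t / dl in q1 *.
  have P : 0 <= (Ch + 1) * X * (Y - 1) by apply: mulr_ge0; [apply: mulr_ge0; lra | lra].
  nra.
have mW : measurable (cyl w : set (EANm E A r0)) by apply: sub_sigma_algebra; exists w.
have m0 : (0 <= m (cyl w))%E := measure_ge0 _ _.
have hx0 : forall x, cyl w x -> (0 <= (h x)%:E)%E by move=> x _; rewrite lee_fin ltW.
split.
- have [Lle|Lgt] := leP ((1 - K1 * e) * h t) 0.
    apply: (@le_trans _ _ 0%E); last exact: (integral_ge0 m hx0).
    by apply: mule_le0_ge0 => //; rewrite lee_fin.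
  rewrite -(integral_cst m mW); apply: le_int_nonmeas => x Hx /=.
    by rewrite lee_fin ltW.
  rewrite lee_fin; have := key x Hx; rewrite ler_norml => /andP[H _]; lra.
- apply: (@le_trans _ _ (\int[m]_(x in cyl w) (cst ((1 + K1 * e) * h t)%:E) x)%E).
    apply: le_int_nonmeas => // x Hx; rewrite lee_fin.
    have := key x Hx; rewrite ler_norml => /andP[_ H]; lra.
  by rewrite integral_cst.
Qed.
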